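(* Let $K_j$ be a finite nonempty set of downstream customers, let $B=(B_{jk})_{k\in K_j}$ with $B_{jk}\in(0,1)$, and consider the distributor's objective $$\mathcal{U}_j(q)=\sum_{k\in K_j}\mathbb{E}\big[B_{jk}P_{jk}(q)q\big]-c_i(q)q,\qquad c_i(q)=p_i^t-\beta_i(q),\quad q\in[0,q^{\max}].$$ Under Assumptions A.2–A.4, let $q^*(B,p_i^t)$ denote the unique interior maximizer of $\mathcal{U}_j$. Then: (i) $q^*$ is nondecreasing in each belief parameter $B_{jk}$, provided the local condition $\frac{d}{dq}\mathbb{E}[P_{jk}(q)q]\big|_{q=q^*}\ge0$ holds; (ii) $q^*$ is nonincreasing in the supplier price $p_i^t$.
   Context: A.2: each resale price function $P_{jk}$ is continuously differentiable, strictly decreasing ($P_{jk}'<0$) and concave ($P_{jk}''\le0$), and the relevant expectations are finite. A.3: the effective procurement cost $c_i(q)=p_i^t-\beta_i(q)$ (with $\beta_i$ a volume rebate not depending on $p_i^t$) is continuously differentiable with $c_i'(q)\ge0$ and $c_i''(q)\ge0$. A.4: feasible quantities lie in $[0,q^{\max}]$ and an interior optimum satisfies the first-order condition $\sum_k\frac{\partial}{\partial q}\mathbb{E}[B_{jk}P_{jk}(q)q]=c_i'(q)q+c_i(q)$. *)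

(* Defs.v *)
From HB Require Import structures.
From mathcomp Require Import all_boot all_order all_algebra.
From mathcomp Require Import all_classical all_reals all_analysis.
Set Implicit Arguments. Unset Strict Implicit. Unset Printing Implicit Defensive.
Import Order.TTheory GRing.Theory Num.Theory.
Import numFieldNormedType.Exports.
Local Open Scope ring_scope.

Definition C1 (R : realType) (f : R -> R) : Prop :=
  (forall x, derivable f x 1) /\ continuous (derive1 f).

Definition twice_derivable (R : realType) (f : R -> R) : Prop :=
  (forall x, derivable f x 1) /\ (forall x, derivable (derive1 f) x 1).

Definition cost (R : realType) (pt : R) (beta : R -> R) : R -> R :=
  fun q => pt - beta q.

(* distributor objective U_j(q) = sum_k B_k * Pbar_k(q) * q - c_i(q) * q,
   where Pbar_k(q) = E[P_jk(q)] is the expected resale price function *)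
Definition objective (R : realType) (K : finType) (B : K -> R)
  (P : K -> R -> R) (pt : R) (beta : R -> R) (q : R) : R :=
  \sum_(k : K) B k * P k q * q - cost pt beta q * q.

Definition interior_maximizer (R : realType) (f : R -> R) (qmax q : R) : Prop :=
  0 < q < qmax /\ (forall q', 0 <= q' <= qmax -> f q' <= f q).

Definition unique_interior_maximizer (R : realType) (f : R -> R) (qmax q : R) : Prop :=
  interior_maximizer f qmax q /\
  (forall q', interior_maximizer f qmax q' -> q' = q).

(* Main.v *)
Require Import Defs.
From HB Require Import structures.
From mathcomp Require Import all_boot all_order all_algebra.
From mathcomp Require Import all_classical all_reals all_analysis.
Import Order.TTheory GRing.Theory Num.Theory.
Import numFieldNormedType.Exports.
Local Open Scope ring_scope.
From mathcomp Require Import ring lra.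
Lemma tangent (R : realType) (f : R -> R) :
  (forall x, derivable f x 1) -> (forall x, derivable (derive1 f) x 1) ->
  (forall x, derive1 (derive1 f) x <= 0) ->
  forall x y, y < x -> f y <= f x + derive1 f x * (y - x).
Proof.
move=> d1 d2 c x y yx.
have [c0 c0in E] : exists2 c, c \in `]y, x[%R & f x - f y = derive1 f c * (x - y).
  apply: MVT => //.
    by move=> z _; rewrite derive1E; apply: derivableP.
  by apply: derivable_within_continuous => z _.
have [cy cx] : y < c0 /\ c0 < x by move: c0in; rewrite in_itv /= => /andP.
have [d0 _ E2] : exists2 d, d \in `]c0, x[%R & derive1 f x - derive1 f c0 = derive1 (derive1 f) d * (x - c0).
  apply: MVT => //.
    by move=> z _; rewrite (derive1E (derive1 f)); apply: derivableP.
  by apply: derivable_within_continuous => z _.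
have h := c d0.
have : derive1 f x <= derive1 f c0 by nra.
nra.
Qed.

Lemma dg (R : realType) (P : R -> R) q : derivable P q 1 ->
  derive1 (fun q => P q * q) q = derive1 P q * q + P q.
Proof.
move=> dP.
have -> : (fun q => P q * q) = P * id by [].
rewrite derive1E deriveM //.
rewrite derive_id derive1E /GRing.scale /=; lra.
Qed.

Theorem theorem5 (R : realType) (K : finType) (qmax : R)
    (P : K -> R -> R) (beta : R -> R)
    (HK : (0 < #|K|)%N)
    (Hqmax : 0 < qmax)
    (* A.2 *)
    (HP_C1 : forall k, C1 (P k))
    (HP_dec : forall k x, derive1 (P k) x < 0)
    (HP_conc : forall k, twice_derivable (P k) /\ forall x, derive1 (derive1 (P k)) x <= 0)
    (* A.3 (beta does not depend on the price) *)
    (Hc_C1 : forall pt, C1 (cost pt beta))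
    (Hc_d1 : forall pt x, 0 <= derive1 (cost pt beta) x)
    (Hc_d2 : forall pt, twice_derivable (cost pt beta) /\
                        forall x, 0 <= derive1 (derive1 (cost pt beta)) x) :
  (* (i) monotone in each belief parameter B_k, under the local condition *)
  (forall (B B' : K -> R) (k : K) (pt q1 q2 : R),
      (forall l, 0 < B l < 1) -> (forall l, 0 < B' l < 1) ->
      (forall l, l != k -> B' l = B l) -> B k <= B' k ->
      unique_interior_maximizer (objective B P pt beta) qmax q1 ->
      unique_interior_maximizer (objective B' P pt beta) qmax q2 ->
      0 <= derive1 (fun q => P k q * q) q1 ->
      q1 <= q2) /\
  (* (ii) nonincreasing in the supplier price p_i^t *)
  (forall (B : K -> R) (pt pt' q1 q2 : R),
      (forall l, 0 < B l < 1) -> pt <= pt' ->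
      unique_interior_maximizer (objective B P pt beta) qmax q1 ->
      unique_interior_maximizer (objective B P pt' beta) qmax q2 ->
      q2 <= q1).
Proof.
split.
- move=> B B' k pt q1 q2 HB HB' Hoth Hk [[Hq1 Hmax1] Hu1] [[Hq2 Hmax2] Hu2] Hg.
  have [q1a q1b] : 0 < q1 /\ q1 < qmax by move/andP: Hq1.
  have [q2a q2b] : 0 < q2 /\ q2 < qmax by move/andP: Hq2.
  have split_obj : forall q, objective B' P pt beta q =
      objective B P pt beta q + (B' k - B k) * (P k q * q).
    move=> q; rewrite /objective (bigD1 k) //= [in RHS](bigD1 k) //=.
    rewrite (eq_bigr (fun l => B l * P l q * q)); last first.
      by move=> l /Hoth ->.
    lra.
  have h1 := Hmax1 q2 (introT andP (conj (ltW q2a) (ltW q2b))).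
  have h2 := Hmax2 q1 (introT andP (conj (ltW q1a) (ltW q1b))).
  rewrite !split_obj in h2.
  case: (ltrP (B k) (B' k)) => Hlt; last first.
    have eqB : B' = B.
      apply: funext => l; case: (eqVneq l k) => [->|/Hoth //].
      by apply/eqP; rewrite eq_le Hk Hlt.
    subst B'.
    rewrite (Hu1 q2) //; split => //.
  rewrite leNgt; apply/negP => H21.
  have Hd := HP_dec k q1.
  have Ht := @tangent _ _ (proj1 (proj1 (HP_conc k))) (proj2 (proj1 (HP_conc k))) (proj2 (HP_conc k)) _ _ H21.
  rewrite dg in Hg; last by case: (HP_C1 k).
  set a := P k q1 in Ht Hg h2; set b := P k q2 in Ht h2.
  set d := derive1 (P k) q1 in Ht Hg Hd.
  have : b * q2 < a * q1.
    have e0 : b * q2 <= (a + d * (q2 - q1)) * q2 by rewrite ler_pM2r.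
    have e1 : 0 < d * (q2 - q1) by rewrite nmulr_rgt0 // subr_lt0.
    have e2 : 0 < (q1 - q2) * (a + d * q2) by apply: mulr_gt0; [rewrite subr_gt0|lra].
    have e3 : (a + d * (q2 - q1)) * q2 = a * q1 - (q1 - q2) * (a + d * q2) by ring.
    lra.
  nra.
- move=> B pt pt' q1 q2 HB Hle [[Hq1 Hmax1] Hu1] [[Hq2 Hmax2] Hu2].
  have [q1a q1b] : 0 < q1 /\ q1 < qmax by move/andP: Hq1.
  have [q2a q2b] : 0 < q2 /\ q2 < qmax by move/andP: Hq2.
  have h1 := Hmax1 q2 (introT andP (conj (ltW q2a) (ltW q2b))).
  have h2 := Hmax2 q1 (introT andP (conj (ltW q1a) (ltW q1b))).
  move: h1 h2; rewrite /objective /cost.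
  set S1 := \sum_(k : K) _; set S2 := \sum_(k : K) _.
  move: Hle; rewrite le_eqVlt => /orP [/eqP eqp|ltp].
    subst pt'; rewrite (Hu1 q2) //.
  nra.
Qed.
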